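(* Let $k > r \geq 2$ be integers and $F$ a graph with $f$ vertices and chromatic number $\chi(F)=k$. For every $\epsilon>0$ there is $n_0$, depending on $k,r,f,\epsilon$, such that for all $n\ge n_0$, \[ \mathrm{ex}_r ( n , F^+ ) < \mathrm{ex}_r ( n , K_{k}^+ ) + \epsilon n^r. \]
   Context: For a graph $G$, its $r$-uniform expansion $G^+$ is obtained by replacing each edge $e$ of $G$ by $e\cup S_e$, where the $S_e$ are sets of $r-2$ new vertices not in $V(G)$, pairwise disjoint for distinct edges (for $r=2$, $G^+=G$). $\mathrm{ex}_r(n,G^+)$ is the maximum number of edges in an $n$-vertex $r$-uniform hypergraph with no subhypergraph isomorphic to $G^+$. $K_k$ is the complete graph on $k$ vertices. *)

(* Defs.v *)
From mathcomp Require Import all_boot all_order all_algebra.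
From mathcomp Require Import reals.
Set Implicit Arguments. Unset Strict Implicit. Unset Printing Implicit Defensive.

Definition hypergraph (T : finType) := {set {set T}}.

Definition is_graph (T : finType) (G : hypergraph T) : bool :=
  [forall e in G, #|e| == 2].

Definition uniform (r : nat) (T : finType) (H : hypergraph T) : bool :=
  [forall e in H, #|e| == r].

Definition contains (T1 T2 : finType) (H1 : hypergraph T1) (H2 : hypergraph T2)
  : bool :=
  [exists phi : {ffun T1 -> T2},
     injectiveb phi && [forall e in H1, (phi @: e) \in H2]].

(* The r-uniform expansion G^+ of a graph G on V: vertex set
   V + (edges of G) x 'I_(r-2); the edge e becomes e together with the r-2
   new vertices (e, 0), ..., (e, r-3). *)
Definition exp_vertex (V : finType) (G : hypergraph V) (r : nat) : finType :=
  (V + ({e : {set V} | e \in G} * 'I_(r - 2)))%type.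

Definition expansion (r : nat) (V : finType) (G : hypergraph V)
  : hypergraph (exp_vertex G r) :=
  [set ((@inl V _) @: val e) :|:
       [set (@inr V _ (e, i)) | i : 'I_(r - 2)]
   | e : {e : {set V} | e \in G}].

Definition ex (r n : nat) (T : finType) (H : hypergraph T) : nat :=
  \max_(E : hypergraph 'I_n | uniform r E && ~~ contains H E) #|E|.

Definition complete_graph (k : nat) : hypergraph 'I_k :=
  [set e : {set 'I_k} | #|e| == 2].

Definition colorable (V : finType) (G : hypergraph V) (k : nat) : Prop :=
  exists c : V -> 'I_k, forall u v : V, [set u; v] \in G -> c u != c v.

Definition chromatic_number_is (V : finType) (G : hypergraph V) (k : nat) : Prop :=
  colorable G k /\ forall j, j < k -> ~ colorable G j.

(* Main.v *)
Require Import Defs.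
From mathcomp Require Import all_boot all_order all_algebra.
From mathcomp Require Import reals.
From mathcomp Require Import zify ring lra.
From Stdlib Require Import Classical.
Import Order.TTheory GRing.Theory Num.Theory.
Set Implicit Arguments. Unset Strict Implicit. Unset Printing Implicit Defensive.

Local Close Scope ring_scope.

Lemma dcount (I J : finType) (A : {set I}) (B : {set J}) (P : I -> J -> bool) :
  \sum_(i in A) #|[set j in B | P i j]| = \sum_(j in B) #|[set i in A | P i j]|.
Proof.
transitivity (\sum_(i in A) \sum_(j in B) (P i j : nat)).
  apply: eq_bigr => i _; rewrite -sum1_card big_mkcond /= [RHS]big_mkcond /=.
  by apply: eq_bigr => j _; rewrite inE; case: (j \in B); case: (P i j).
rewrite exchange_big /=; apply: eq_bigr => j _.
rewrite -sum1_card big_mkcond /= [RHS]big_mkcond /=.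
by apply: eq_bigr => i _; rewrite inE; case: (i \in A); case: (P i j).
Qed.

Lemma setUD_sub (T : finType) (A S : {set T}) : A \subset S -> A :|: (S :\: A) = S.
Proof.
move=> AS; apply/setP => x; rewrite !inE; case xA: (x \in A) => //=.
by rewrite (subsetP AS x xA).
Qed.

Lemma supsets_card (T : finType) (A : {set T}) m : #|A| <= m ->
  #|[set S : {set T} | (A \subset S) && (#|S| == m)]| = 'C(#|T| - #|A|, m - #|A|).
Proof.
move=> Am.
rewrite -(cardsC A) addKn -cards_draws.
rewrite -(@card_in_imset _ _ (fun S => S :\: A)); last first.
  move=> S1 S2; rewrite !inE => /andP[h1 _] /andP[h2 _] e.
  by rewrite -(setUD_sub h1) -(setUD_sub h2) e.
apply: eq_card => S'; rewrite inE; apply/imsetP/andP.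
  case=> S; rewrite inE => /andP[AS /eqP cS] ->; split.
    by apply/subsetP => x; rewrite !inE => /andP[].
  by rewrite cardsD (setIidPr AS) cS.
case=> sS /eqP cS; exists (A :|: S').
  rewrite inE subsetUl /= cardsU.
  have -> : A :&: S' = set0.
    apply/setP => x; rewrite !inE; case xA: (x \in A) => //=.
    by apply/negP => xS; move: (subsetP sS x xS); rewrite inE xA.
  by rewrite cards0 subn0 cS subnKC.
apply/setP => x; rewrite !inE; case xA: (x \in A) => //=.
by case xS: (x \in S') => //; move: (subsetP sS x xS); rewrite inE xA.
Qed.

Lemma bin_swap n m v : v <= m -> m <= n ->
  'C(n, m) * 'C(m, v) = 'C(n, v) * 'C(n - v, m - v).
Proof.
move=> vm mn.
have h1 := bin_fact mn; have h2 := bin_fact vm.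
have vn : v <= n by apply: leq_trans vm mn.
have h3 := bin_fact vn.
have h4 : m - v <= n - v by apply: leq_sub2r.
have h5 := bin_fact h4.
have e : n - v - (m - v) = n - m by lia.
rewrite e in h5.
apply/eqP; rewrite -(eqn_pmul2r (fact_gt0 v)) -(eqn_pmul2r (fact_gt0 (m - v))) -(eqn_pmul2r (fact_gt0 (n - m))).
apply/eqP.
transitivity ('C(n, m) * ('C(m, v) * (v`! * (m - v)`!)) * (n - m)`!); first by ring.
rewrite h2.
transitivity ('C(n, v) * v`! * ('C(n - v, m - v) * ((m - v)`! * (n - m)`!))); last by ring.
rewrite h5 -mulnA h1 -mulnA h3 //.
Qed.

Lemma bin_le_exp n r : 'C(n, r) <= n ^ r.
Proof.
apply: (@leq_trans ('C(n, r) * r`!)); first by rewrite leq_pmulr ?fact_gt0.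
rewrite bin_ffact ffact_prod.
have -> : n ^ r = \prod_(i < r) n by rewrite prod_nat_const card_ord.
by apply: leq_prod => i _; rewrite leq_subr.
Qed.

Lemma bin_ge n v : (n - v) ^ v <= 'C(n, v) * v`!.
Proof.
rewrite bin_ffact ffact_prod.
have -> : (n - v) ^ v = \prod_(i < v) (n - v) by rewrite prod_nat_const card_ord.
by apply: leq_prod => i _; apply: leq_sub2l; apply: ltnW.
Qed.


Local Close Scope ring_scope.
Local Open Scope ring_scope.

Lemma descent (R : realType) (a : nat -> R) (d : R) (m0 : nat) : 0 < d ->
  (forall n, 0 <= a n) ->
  exists m : nat, (m0 <= m)%N /\ forall n, (m <= n)%N -> a m - d <= a n.
Proof.
move=> d0 a0; apply: NNPP => H.
have step : forall m, (m0 <= m)%N -> exists n, (m <= n)%N /\ a n < a m - d.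
  move=> m hm; apply: NNPP => H2; apply: H; exists m; split => // n mn.
  rewrite leNgt; apply/negP => hn; apply: H2; by exists n.
have claim : forall L : nat, exists n, (m0 <= n)%N /\ a n <= a m0 - L%:R * d.
  elim=> [|L [n [hn ha]]]; first by exists m0; rewrite mul0r subr0.
  have [n' [nn' ha']] := step n hn.
  exists n'; split; first exact: leq_trans nn'.
  rewrite -natr1 mulrDl mul1r; lra.
have hb : 0 <= a m0 / d by rewrite divr_ge0 // ltW.
have [n [_ ha]] := claim (Num.bound (a m0 / d)).
have := archi_boundP hb; rewrite ltr_pdivrMr // => hh.
have := a0 n; lra.
Qed.


Local Close Scope ring_scope.
Local Open Scope ring_scope.

Lemma greedy (R : realType) (Y : finType) (n : nat) (P : Y -> 'I_n -> bool)
  (B : {set Y}) (a : R) (j : nat) :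
  0 <= a -> (j <= n)%N ->
  (forall y, y \in B -> j%:R + a * n%:R <= #|[set x | P y x]|%:R) ->
  exists X : {set 'I_n}, exists B' : {set Y},
    [/\ #|X| = j, B' \subset B, (forall y x, y \in B' -> x \in X -> P y x) &
      a ^+ j * #|B|%:R <= #|B'|%:R].
Proof.
move=> a0; elim: j => [|j IH] jn hB.
  exists set0, B; split => //; first by rewrite cards0.
  by move=> y x _; rewrite inE.
  by rewrite expr0 mul1r.
have [X [B' [cX sB PB cB]]] : exists X : {set 'I_n}, exists B' : {set Y},
    [/\ #|X| = j, B' \subset B, (forall y x, y \in B' -> x \in X -> P y x) &
      a ^+ j * #|B|%:R <= #|B'|%:R].
  apply: IH; first by apply: ltnW.
  move=> y yB; apply: le_trans (hB y yB); rewrite lerD2r ler_nat; exact: leqnSn.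
set S := ~: X.
have cS : #|S| = (n - j)%N by rewrite /S cardsCs setCK card_ord cX.
have [x [xS hx]] : exists x, x \in S /\ a * #|B'|%:R <= #|[set y in B' | P y x]|%:R.
  have [B0 | Bpos] := eqVneq #|B'| 0%N.
    have : (0 < #|S|)%N by rewrite cS; lia.
    case/card_gt0P => x xS; exists x; split => //; rewrite B0 mulr0 ler0n //.
  apply: NNPP => hn.
  have hall : forall x, x \in S -> #|[set y in B' | P y x]|%:R < a * #|B'|%:R.
    by move=> x xS; rewrite ltNge; apply/negP => h; apply: hn; exists x.
  have h1 : (\sum_(x in S) #|[set y in B' | P y x]|)%:R <= #|S|%:R * (a * #|B'|%:R).
    rewrite natr_sum mulr_natl -sumr_const; apply: ler_sum => x xS.
    exact: ltW (hall x xS).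
  rewrite (@dcount _ _ S B' (fun x y => P y x)) in h1.
  have h2 : #|B'|%:R * (1 + a * n%:R) <= (\sum_(y in B') #|[set x in S | P y x]|)%:R :> R.
    rewrite natr_sum mulr_natl -sumr_const; apply: ler_sum => y yB.
    have := hB y (subsetP sB y yB).
    have : (#|[set x | P y x]| <= #|[set x in S | P y x]| + #|X|)%N.
      rewrite -(cardsID X [set x | P y x]) addnC; apply: leq_add.
        apply: subset_leq_card; apply/subsetP => z; rewrite !inE => /andP[z1 z2].
        by rewrite z1 z2.
      by apply: subset_leq_card; apply: subsetIr.
    rewrite cX -(ler_nat R) natrD -natr1; lra.
  have hS : #|S|%:R <= n%:R :> R by rewrite ler_nat cS leq_subr.
  have Bp : 0 < #|B'|%:R :> R by rewrite ltr0n lt0n.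
  have : #|S|%:R * (a * #|B'|%:R) <= n%:R * (a * #|B'|%:R) :> R.
    by apply: ler_wpM2r => //; apply: mulr_ge0 => //.
  nra.
have xX : x \notin X by move: xS; rewrite inE.
exists (x |: X), [set y in B' | P y x]; split.
- by rewrite cardsU1 xX cX.
- apply: subset_trans sB; apply/subsetP => y; rewrite inE => /andP[].
  done.
- move=> y z; rewrite !inE => /andP[yB Pyx] /orP[/eqP -> //|zX].
  exact: PB.
- apply: le_trans hx; rewrite exprSr -mulrA mulrC -mulrA ler_wpM2l //.
  by rewrite mulrC.
Qed.


Local Close Scope ring_scope.

Lemma card_cons (T : finType) v (A : {set (v.+1).-tuple T}) :
  #|A| = \sum_(tp : v.-tuple T) #|[set x | [tuple of x :: tp] \in A]|.
Proof.
transitivity (\sum_(tp : v.-tuple T) \sum_(x : T) ([tuple of x :: tp] \in A : nat)); last first.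
  apply: eq_bigr => tp _; rewrite -sum1_card [RHS]big_mkcond /=.
  by apply: eq_bigr => x _; rewrite inE; case: ([tuple of x :: tp] \in A).
rewrite exchange_big pair_big /=.
rewrite -sum1_card big_mkcond /=.
rewrite (reindex (fun p : T * v.-tuple T => [tuple of p.1 :: p.2])) /=; last first.
  exists (fun s : (v.+1).-tuple T => (thead s, [tuple of behead s])).
    by move=> [x tp] _ /=; rewrite theadE; congr (_, _); apply: val_inj.
  by move=> s _ /=; rewrite [RHS]tuple_eta.
by apply: eq_bigr => p _; case: ([tuple of p.1 :: p.2] \in A).
Qed.

Local Open Scope ring_scope.

Lemma card_ind (T : finType) (B : {set T}) :
  \sum_(x : T) (if x \in B then 1%N else 0%N) = #|B|.
Proof. by rewrite -big_mkcond /= sum1_card. Qed.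

Lemma KST (R : realType) (t v : nat) : forall c : R, 0 < c ->
  exists N : nat, forall n, (N <= n)%N -> forall A : {set v.-tuple 'I_n},
    c * n%:R ^+ v <= #|A|%:R ->
    exists T : 'I_v -> {set 'I_n}, (forall i, (t <= #|T i|)%N) /\
      (forall tp : v.-tuple 'I_n, (forall i, tnth tp i \in T i) -> tp \in A).
Proof.
elim: v => [|v IH] c c0.
  exists 0%N => n _ A hA; exists (fun _ => set0); split; first by case.
  move=> tp _.
  have : (0 < #|A|)%N.
    by rewrite -(ltr_nat R); rewrite expr0 mulr1 in hA; apply: lt_le_trans hA.
  by case/card_gt0P => tp0 h; rewrite (tuple0 tp) -(tuple0 tp0).
set c' := (c / 4) ^+ t * (c / 2).
have c'0 : 0 < c' by rewrite /c' mulr_gt0 // ?exprn_gt0 // divr_gt0.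
have [N' HN'] := IH c' c'0.
exists (maxn N' (maxn t (Num.bound (4 * t%:R / c)))) => n hn A hA.
have hn' : (N' <= n)%N by move: hn; rewrite !geq_max => /andP[].
have ht : (t <= n)%N by move: hn; rewrite !geq_max => /and3P[].
have h0 : 0 <= 4 * t%:R / c.
  by apply: divr_ge0; [apply: mulr_ge0 | apply: ltW].
have hb : 4 * t%:R / c < n%:R.
  apply: lt_le_trans (archi_boundP h0) _; rewrite ler_nat.
  by move: hn; rewrite !geq_max => /and3P[].
have hb' : 4 * t%:R < c * n%:R by move: hb; rewrite ltr_pdivrMr // [n%:R * c]mulrC.
set P := fun (tp : v.-tuple 'I_n) (x : 'I_n) => [tuple of x :: tp] \in A.
set B := [set tp : v.-tuple 'I_n | c * n%:R / 2 <= #|[set x | P tp x]|%:R].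
have npos : 0 < n%:R :> R.
  exact: le_lt_trans hb.
have hB : c / 2 * n%:R ^+ v <= #|B|%:R.
  have h1 : #|A|%:R <= \sum_(tp : v.-tuple 'I_n)
        ((if tp \in B then 1%N else 0%N)%:R * n%:R + c * n%:R / 2) :> R.
    rewrite (card_cons A) natr_sum; apply: ler_sum => tp _.
    case: ifP => tpB.
      have : (#|[set x | P tp x]| <= n)%N.
        by apply: leq_trans (max_card _) _; rewrite card_ord.
      rewrite -(ler_nat R) => h; rewrite mul1r.
      have : 0 <= c * n%:R / 2 by rewrite divr_ge0 // ?mulr_ge0 // ltW.
      lra.
    by move: tpB; rewrite inE => /negbT; rewrite -ltNge mul0r add0r => /ltW.
  rewrite big_split /= -mulr_suml -natr_sum card_ind sumr_const card_tuple card_ord in h1.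
  rewrite exprSr mulrA in hA.
  have h2 : c * n%:R ^+ v * n%:R <= #|B|%:R * n%:R + c * n%:R / 2 *+ n ^ v :> R.
    by apply: le_trans h1.
  rewrite -[_ *+ (n ^ v)]mulr_natr natrX in h2.
  have h3 : (c / 2 * n%:R ^+ v) * n%:R <= #|B|%:R * n%:R by nra.
  by rewrite ler_pM2r in h3.
have hy : forall y, y \in B -> t%:R + c / 4 * n%:R <= #|[set x | P y x]|%:R.
  move=> y; rewrite inE => hy; apply: le_trans hy; lra.
have [X [B' [cX sB PB cB]]] := @greedy R _ n P B (c / 4) t
  (ltW (divr_gt0 c0 (ltr0Sn _ _))) ht hy.
have hB' : c' * n%:R ^+ v <= #|B'|%:R.
  apply: le_trans cB; rewrite /c' -mulrA ler_wpM2l //.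
  by rewrite exprn_ge0 // divr_ge0 // ltW.
have [T' [cT' PT']] := HN' n hn' B' hB'.
exists (fun i => if unlift ord0 i is Some i' then T' i' else X); split.
  by move=> i; case: (unlift ord0 i) => [i'|] //; rewrite cX.
move=> tp htp.
rewrite (tuple_eta tp).
have h1 : [tuple of behead tp] \in B'.
  apply: PT' => i; rewrite tnth_behead.
  have -> : inord i.+1 = lift ord0 i :> 'I_v.+1.
    by apply: val_inj; rewrite /= inordK ?ltnS // /bump leq0n add1n.
  by have := htp (lift ord0 i); rewrite liftK.
have h2 : thead tp \in X by have := htp ord0; rewrite unlift_none.
exact: (PB _ _ h1 h2).
Qed.


Local Close Scope ring_scope.

Lemma ex_ub r m (T : finType) (H0 : hypergraph T) (E : hypergraph 'I_m) :
  uniform r E -> ~~ contains H0 E -> #|E| <= ex r m H0.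
Proof. by move=> u c; rewrite /ex; apply: (@leq_bigmax_cond _ (fun E : hypergraph 'I_m => uniform r E && ~~ contains H0 E) (fun E => #|E|)); rewrite u c. Qed.

Definition Emb (T : finType) (H0 : hypergraph T) n (E : hypergraph 'I_n) :=
  [set phi : {ffun T -> 'I_n} | injectiveb phi && [forall e in H0, (phi @: e) \in E]].

Lemma good_emb r m n (T : finType) (H0 : hypergraph T) (E : hypergraph 'I_n)
  (S : {set 'I_n}) : uniform r E -> #|S| = m ->
  ex r m H0 < #|[set h in E | h \subset S]| ->
  exists2 phi, phi \in Emb H0 E & [set phi x | x in T] \subset S.
Proof.
move=> uE hS hlt.
pose g (i : 'I_m) : 'I_n := enum_val (cast_ord (esym hS) i).
have ginj : injective g.
  by move=> i j /enum_val_inj /cast_ord_inj.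
have gS : forall i, g i \in S by move=> i; apply: enum_valP.
have Sg : forall s, s \in S -> exists i, s = g i.
  move=> s sS; exists (cast_ord hS (enum_rank_in sS s)).
  by rewrite /g cast_ordK enum_rankK_in.
pose Eg := [set e : {set 'I_m} | g @: e \in E].
have uEg : uniform r Eg.
  apply/forallP => e; apply/implyP; rewrite inE => he.
  by rewrite -(card_imset _ ginj); move/forallP: uE => /(_ _) /implyP; apply.
have cEg : #|[set h in E | h \subset S]| <= #|Eg|.
  apply: (leq_trans _ (leq_imset_card (fun e : {set 'I_m} => g @: e) Eg)); apply: subset_leq_card.
  apply/subsetP => h; rewrite inE => /andP[hE hsub].
  have eh : h = g @: (g @^-1: h).
    apply/setP => x; apply/idP/imsetP => [xh | [y]]; last by rewrite inE => ? ->.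
    have [i ei] := Sg x (subsetP hsub x xh); by exists i; rewrite // inE -ei.
  by apply/imsetP; exists (g @^-1: h); rewrite // inE -eh.
have : contains H0 Eg.
  apply: contraT => nc; have := ex_ub uEg nc; rewrite leqNgt.
  by rewrite (leq_trans hlt cEg).
case/existsP => psi /andP[/injectiveP psiinj /forallP hpsi].
exists [ffun x => g (psi x)].
  rewrite inE; apply/andP; split.
    by apply/injectiveP => x y; rewrite !ffunE => /ginj /psiinj.
  apply/forallP => e; apply/implyP => eH.
  have := hpsi e; rewrite eH /= inE.
  have -> : [set [ffun x => g (psi x)] x | x in e] = g @: (psi @: e).
    by rewrite -imset_comp; apply: eq_imset => x; rewrite ffunE.
  done.
by apply/subsetP => y /imsetP[x _ ->]; rewrite ffunE.
Qed.

Lemma sum_ind_sub (I : finType) (A B : {set I}) : A \subset B ->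
  \sum_(x in B) ((x \in A) : nat) = #|A|.
Proof.
move=> AB; rewrite -sum1_card big_mkcond [RHS]big_mkcond /=.
apply: eq_bigr => x _; case xA: (x \in A); case xB: (x \in B) => //.
by rewrite (subsetP AB x xA) in xB.
Qed.

Local Open Scope ring_scope.

Lemma supersat (R : realType) (T : finType) (H0 : hypergraph T) r m n (d : R)
  (E : hypergraph 'I_n) :
  (#|T| <= m)%N -> (r <= m)%N -> (m <= n)%N -> uniform r E ->
  ((ex r m H0)%:R / ('C(m, r))%:R + d) * ('C(n, r))%:R <= #|E|%:R ->
  d * ('C(n, #|T|))%:R <= #|Emb H0 E|%:R * ('C(m, #|T|))%:R.
Proof.
move=> vm rm mn uE hE.
set v := #|T|.
set Sm := [set S : {set 'I_n} | #|S| == m].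
pose ES (S : {set 'I_n}) := [set h in E | h \subset S].
set good := [set S in Sm | (ex r m H0 < #|ES S|)%N].
have cSm : #|Sm| = 'C(n, m) by rewrite /Sm card_draws card_ord.
have cE : forall h, h \in E -> #|h| = r.
  by move=> h hE'; move/forallP: uE => /(_ h) /implyP /(_ hE') /eqP.
have i1 : (\sum_(S in Sm) #|ES S| = #|E| * 'C(n - r, m - r))%N.
  rewrite (@dcount _ _ Sm E (fun S h => h \subset S)) -sum_nat_const.
  apply: eq_bigr => h hE'.
  have hs := @supsets_card _ h m; rewrite card_ord (cE h hE') in hs.
  rewrite -hs //; by apply: eq_card => S; rewrite !inE andbC.
have i2 : forall S, S \in Sm -> (#|ES S| <= 'C(m, r))%N.
  move=> S; rewrite inE => /eqP cS; rewrite -cS -cards_draws.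
  apply: subset_leq_card; apply/subsetP => h; rewrite !inE => /andP[hE' hS].
  by rewrite hS cE // eqxx.
have i3 : (\sum_(S in Sm) #|ES S| <= #|good| * 'C(m, r) + #|Sm| * ex r m H0)%N.
  apply: (@leq_trans (\sum_(S in Sm) (((S \in good) : nat) * 'C(m, r) + ex r m H0))).
    apply: leq_sum => S SSm; case Sg: (S \in good); first by rewrite mul1n; apply: leq_trans (i2 S SSm) (leq_addr _ _).
    move: Sg; rewrite inE SSm /= => /negbT; rewrite -leqNgt mul0n add0n.
    done.
  rewrite big_split /= -big_distrl /= sum_ind_sub; last first.
    by apply/subsetP => S; rewrite inE => /andP[].
  by rewrite sum_nat_const mulnC.
have i5 : (#|good| <= #|Emb H0 E| * 'C(n - v, m - v))%N.
  apply: (@leq_trans (\sum_(S in good) #|[set phi in Emb H0 E | [set phi x | x in T] \subset S]|)).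
    rewrite -sum1_card; apply: leq_sum => S; rewrite inE => /andP[SSm hS].
    move: SSm; rewrite inE => /eqP cS.
    have [phi p1 p2] := good_emb uE cS hS.
    by apply/card_gt0P; exists phi; rewrite inE p1.
  rewrite (@dcount _ _ good (Emb H0 E) (fun S phi => [set phi x | x in T] \subset S)).
  rewrite -sum_nat_const; apply: leq_sum => phi; rewrite inE => /andP[/injectiveP pinj _].
  have ci : #|[set phi x | x in T]| = v by rewrite card_imset.
  have hs := @supsets_card _ [set phi x | x in T] m; rewrite card_ord ci in hs.
  rewrite -hs //.
  apply: subset_leq_card; apply/subsetP => S; rewrite !inE => /andP[/andP[h0 _] h2].
  by rewrite h2 h0.
have b1 := bin_swap rm mn.
have b2 := bin_swap vm mn.
have Cmr : 0 < ('C(m, r))%:R :> R by rewrite ltr0n bin_gt0.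
have Dv : 0 < ('C(n - v, m - v))%:R :> R by rewrite ltr0n bin_gt0 leq_sub2r.
have Dr : 0 <= ('C(n - r, m - r))%:R :> R by [].
have h1 : (#|E| * 'C(n - r, m - r))%:R <= (#|good| * 'C(m, r) + #|Sm| * ex r m H0)%:R :> R.
  by rewrite ler_nat -i1.
rewrite natrD !natrM cSm in h1.
have b1' : ('C(n, m))%:R * ('C(m, r))%:R = ('C(n, r))%:R * ('C(n - r, m - r))%:R :> R.
  by rewrite -!natrM b1.
have b2' : ('C(n, m))%:R * ('C(m, v))%:R = ('C(n, v))%:R * ('C(n - v, m - v))%:R :> R.
  by rewrite -!natrM b2.
have h2 : d * ('C(n, m))%:R <= #|good|%:R :> R.
  have h3 := ler_wpM2r Dr hE.
  have e1 : ((ex r m H0)%:R / ('C(m, r))%:R + d) * ('C(n, r))%:R * ('C(n - r, m - r))%:R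
     = (ex r m H0)%:R * ('C(n, m))%:R + d * ('C(n, m))%:R * ('C(m, r))%:R :> R.
    rewrite -mulrA -b1' mulrDl; field; by rewrite gt_eqF.
  rewrite e1 in h3.
  have : d * ('C(n, m))%:R * ('C(m, r))%:R <= #|good|%:R * ('C(m, r))%:R by nra.
  by rewrite ler_pM2r.
have h4 : (#|good|)%:R <= (#|Emb H0 E| * 'C(n - v, m - v))%:R :> R by rewrite ler_nat.
rewrite natrM in h4.
have : d * ('C(n, v))%:R * ('C(n - v, m - v))%:R <= #|Emb H0 E|%:R * ('C(m, v))%:R * ('C(n - v, m - v))%:R.
  have Cmv : 0 <= ('C(m, v))%:R :> R by [].
  have h5 := ler_wpM2r Cmv (le_trans h2 h4).
  have e2 : d * ('C(n, v))%:R * ('C(n - v, m - v))%:R = d * ('C(n, m))%:R * ('C(m, v))%:R.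
    by rewrite -mulrA -b2' mulrA.
  rewrite e2; apply: le_trans h5 _; rewrite -!mulrA.
  by rewrite [('C(n - v, m - v))%:R * _]mulrC.
by rewrite ler_pM2r.
Qed.


Local Close Scope ring_scope.

Lemma col_edge (f k : nat) (F : hypergraph 'I_f) (col : 'I_f -> 'I_k)
  (prop : forall u v, [set u; v] \in F -> col u != col v) (e : {set 'I_f}) :
  is_graph F -> e \in F ->
  exists u w, [/\ u != w, e = [set u; w] & col u != col w].
Proof.
move=> /forallP /(_ e) /implyP isg eF; have := isg eF.
case/cards2P => u [w [uw ee]]; exists u, w; split => //.
by apply: prop; rewrite -ee.
Qed.

Lemma col_edgeK (f k : nat) (F : hypergraph 'I_f) (col : 'I_f -> 'I_k)
  (prop : forall u v, [set u; v] \in F -> col u != col v) (e : {set 'I_f}) :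
  is_graph F -> e \in F -> col @: e \in complete_graph k.
Proof.
move=> isg eF; have [u [w [uw ee cc]]] := col_edge prop isg eF.
by rewrite inE ee imsetU1 imset_set1 cards2 cc.
Qed.

Lemma build (k r f n : nat) (F : hypergraph 'I_f) (col : 'I_f -> 'I_k)
  (E : hypergraph 'I_n)
  (Tk : exp_vertex (complete_graph k) r -> {set 'I_n}) :
  (1 < k)%N -> (0 < n)%N -> is_graph F ->
  (forall u v, [set u; v] \in F -> col u != col v) ->
  (forall x, (f + #|{: {set 'I_f}}| <= #|Tk x|)%N) ->
  (forall phi : {ffun exp_vertex (complete_graph k) r -> 'I_n},
     (forall x, phi x \in Tk x) -> phi \in Emb (expansion r (complete_graph k)) E) ->
  contains (expansion r F) E.
Proof.
move=> k1 n0 isg prop hT hP.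
set VK := exp_vertex (complete_graph k) r.
set VF := exp_vertex F r.
have x0 : 'I_n := Ordinal n0.
pose i0 : 'I_k := Ordinal (ltnW k1).
pose i1 : 'I_k := Ordinal k1.
have e0K : [set i0; i1] \in complete_graph k by rewrite inE cards2.
pose kdef : {e : {set 'I_k} | e \in complete_graph k} := exist (fun e => e \in complete_graph k) _ e0K.
pose kap (ee : {e : {set 'I_f} | e \in F}) : {e : {set 'I_k} | e \in complete_graph k} :=
  insubd kdef (col @: val ee).
have kapE : forall ee, val (kap ee) = col @: val ee.
  by move=> ee; rewrite /kap insubdK //; apply: col_edgeK (valP ee).
pose slot (a : VF) : VK := match a with
  | inl u => inl (col u) | inr (ee, i) => inr (kap ee, i) end.
pose idx (a : VF) : nat := match a with
  | inl u => val u | inr (ee, i) => (f + enum_rank (val ee))%N end.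
have idx_lt : forall a, (idx a < f + #|{: {set 'I_f}}|)%N.
  case=> [u|[ee i]] /=; first by apply: leq_trans (ltn_ord u) (leq_addr _ _).
  by rewrite ltn_add2l.
pose sel (x : VK) (i : nat) : 'I_n := nth x0 (enum (Tk x)) i.
have selT : forall x i, (i < f + #|{: {set 'I_f}}|)%N -> sel x i \in Tk x.
  move=> x i hi; rewrite /sel -mem_enum; apply: mem_nth; rewrite -cardE.
  exact: leq_trans hi (hT x).
have selT0 : forall x, sel x 0 \in Tk x.
  move=> x; apply: selT; rewrite addn_gt0; apply/orP; right.
  by apply/card_gt0P; exists set0.
have disj : forall x y z, z \in Tk x -> z \in Tk y -> x = y.
  move=> x y z zx zy; apply/eqP; apply: contraT => xy.
  pose phi := [ffun w : VK => if w == x then z else if w == y then z else sel w 0].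
  have : phi \in Emb (expansion r (complete_graph k)) E.
    apply: hP => w; rewrite ffunE.
    by case: eqP => [->|_] //; case: eqP => [->|_].
  rewrite inE => /andP[/injectiveP pinj _].
  have : phi x = phi y by rewrite !ffunE !eqxx; case: (y == x).
  by move/pinj/eqP; rewrite (negbTE xy).
pose Phi := [ffun a : VF => sel (slot a) (idx a)].
have PhiT : forall a, Phi a \in Tk (slot a) by move=> a; rewrite ffunE; apply: selT.
have Phiinj : injective Phi.
  move=> a b eab.
  have sab : slot a = slot b by apply: (disj _ _ (Phi a) (PhiT a)); rewrite eab.
  have iab : idx a = idx b.
    move: eab; rewrite !ffunE sab => /eqP; rewrite /sel nth_uniq ?enum_uniq //.
    - by move/eqP.
    - by rewrite -cardE; apply: leq_trans (idx_lt a) (hT _).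
    - by rewrite -cardE; apply: leq_trans (idx_lt b) (hT _).
  move: sab iab; clear eab; case: a => [u|[ee i]]; case: b => [u'|[ee' i']] //=.
  - by move=> _ /val_inj ->.
  - by move=> [_ ->] /eqP; rewrite eqn_add2l => /eqP /val_inj /enum_rank_inj /val_inj ->.
apply/existsP; exists Phi; apply/andP; split; first by apply/injectiveP.
apply/forallP => ep; apply/implyP => /imsetP [ee _ ->].
set EF := _ :|: _.
have memEF : forall a, a \in EF ->
    (exists2 u, u \in val ee & a = inl u) \/ (exists i, a = inr (ee, i)).
  move=> a; rewrite inE => /orP[/imsetP[u uee ->]|/imsetP[i _ ->]].
    by left; exists u.
  by right; exists i.
have [u0 [w0 [uw0 ee0 cc0]]] := col_edge prop isg (valP ee).
have slotinj : {in EF &, injective slot}.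
  move=> a b /memEF[[u ue ->]|[i ->]] /memEF[[w we ->]|[j ->]] //=.
  - move=> [cuw]; congr inl.
    move: ue we; rewrite ee0 !inE => /orP[]/eqP ? /orP[]/eqP ?; subst => //;
      by move: cc0; rewrite ?cuw ?eqxx // -cuw eqxx.
  - by move=> [->].
set EK := (@inl 'I_k _) @: val (kap ee) :|: [set (@inr 'I_k _ (kap ee, i)) | i : 'I_(r - 2)].
have slotEF : slot @: EF = EK.
  rewrite /EF /EK imsetU -!imset_comp kapE -imset_comp.
  congr (_ :|: _); by apply: eq_imset.
have EKin : EK \in expansion r (complete_graph k) by apply/imsetP; exists (kap ee).
pose phi : {ffun VK -> 'I_n} := [ffun s => if [pick a in EF | slot a == s] is Some a then Phi a else sel s 0].
have : phi \in Emb (expansion r (complete_graph k)) E.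
  apply: hP => s; rewrite ffunE; case: pickP => [a /andP[_ /eqP <-]|_] //.
rewrite inE => /andP[_ /forallP /(_ EK)]; rewrite EKin /= -slotEF -imset_comp.
have -> : [set (phi \o slot) x | x in EF] = [set Phi x | x in EF].
  apply: eq_in_imset => a aEF /=; rewrite ffunE; case: pickP => [a' /andP[a'EF /eqP sa]|].
    by rewrite (slotinj _ _ a'EF aEF sa).
  by move/(_ a); rewrite aEF eqxx.
done.
Qed.


Local Close Scope ring_scope.

Lemma bigmax_att (I : finType) (P : pred I) (Fn : I -> nat) :
  (exists i, P i) -> exists2 i, P i & \max_(i | P i) Fn i = Fn i.
Proof.
move=> [i0 Pi0].
have : (0 < #|P|)%N by apply/card_gt0P; exists i0.
case/(@eq_bigmax_cond _ P Fn) => i Pi e; exists i => //.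
Qed.

Lemma leq_pow m n e : (m <= n)%N -> (m ^ e <= n ^ e)%N.
Proof. by case: e => [|e] mn //; rewrite leq_exp2r. Qed.

Local Open Scope ring_scope.

Lemma ex_lt (R : realType) r n (T : finType) (H : hypergraph T) (B : R) :
  0 < B -> (forall E : hypergraph 'I_n, uniform r E -> ~~ contains H E -> #|E|%:R < B) ->
  (ex r n H)%:R < B.
Proof.
move=> B0 hE; rewrite /ex.
case: (pickP (fun E : hypergraph 'I_n => uniform r E && ~~ contains H E)) => [E0 h0|none].
  have [E1 /andP[u c] ->] := @bigmax_att _ (fun E : hypergraph 'I_n => uniform r E && ~~ contains H E) (fun E => #|E|) (ex_intro _ E0 h0).
  exact: hE.
by rewrite big_pred0.
Qed.

Lemma aux_nat v n : (2 * v < n)%N -> (n <= 2 * (n - v))%N.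
Proof. lia. Qed.

Lemma aux_ineq (R : realType) (P Q M Cn X d nv : R) :
  nv <= P * (Cn * Q) -> d * Cn <= X * M ->
  0 < P -> 0 < Q -> 0 < M -> 0 <= d -> d / (P * Q * M) * nv <= X.
Proof.
move=> h1 h2 P0 Q0 M0 d0.
apply: (@le_trans _ _ (d / (P * Q * M) * (P * (Cn * Q)))).
  by apply: ler_wpM2l => //; rewrite divr_ge0 // ltW // !mulr_gt0.
have -> : d / (P * Q * M) * (P * (Cn * Q)) = d * Cn / M.
  by field; rewrite !gt_eqF.
by rewrite ler_pdivrMr.
Qed.

Theorem lemma3p1 (R : realType) (k r f : nat) (eps : R) :
  (2 <= r)%N -> (r < k)%N -> 0 < eps ->
  exists n0 : nat,
    forall (F : hypergraph 'I_f),
      is_graph F -> chromatic_number_is F k ->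
      forall n : nat, (n0 <= n)%N ->
        (ex r n (expansion r F))%:R <
          (ex r n (expansion r (complete_graph k)))%:R + eps * n%:R ^+ r.
Proof.
move=> r2 rk e0.
set K := expansion r (complete_graph k).
set VK := exp_vertex (complete_graph k) r.
set v := #|VK|.
set d := eps / 2.
have d0 : 0 < d by rewrite divr_gt0.
pose a (j : nat) : R := (ex r j K)%:R / ('C(j, r))%:R.
have a0 : forall j, 0 <= a j by move=> j; rewrite /a divr_ge0.
have [m [mm0 hm]] := descent (maxn v r) d0 a0.
have vm : (v <= m)%N by move: mm0; rewrite geq_max => /andP[].
have rm : (r <= m)%N by move: mm0; rewrite geq_max => /andP[].
set c : R := d / ((2 ^ v * v`! * 'C(m, v))%N)%:R.
have Cmv : (0 < 'C(m, v))%N by rewrite bin_gt0.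
have c0 : 0 < c.
  by rewrite divr_gt0 // ltr0n !muln_gt0 expn_gt0 fact_gt0 Cmv.
set t := (f + #|{: {set 'I_f}}|)%N.
have [N HN] := KST t v c0.
exists (maxn N (maxn m (2 * v).+1)) => F isg [[col hcol] _] n hn.
have nN : (N <= n)%N by move: hn; rewrite !geq_max => /and3P[].
have mn : (m <= n)%N by move: hn; rewrite !geq_max => /and3P[].
have vn : (2 * v < n)%N by move: hn; rewrite !geq_max => /and3P[].
have rn : (r <= n)%N by apply: leq_trans rm mn.
have n0 : (0 < n)%N by apply: leq_ltn_trans vn.
apply: ex_lt.
  by apply: ltr_wpDl; [|rewrite mulr_gt0 // exprn_gt0 // ltr0n].
move=> E uE ncE; rewrite ltNge; apply/negP => hE.
move/negP: ncE; apply.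
have Cnr : 0 < ('C(n, r))%:R :> R by rewrite ltr0n bin_gt0.
have Cmr : 0 < ('C(m, r))%:R :> R by rewrite ltr0n bin_gt0.
have exn : (ex r n K)%:R = a n * ('C(n, r))%:R by rewrite /a divfK // gt_eqF.
have Cnr_le : ('C(n, r))%:R <= n%:R ^+ r :> R by rewrite -natrX ler_nat bin_le_exp.
have hE' : ((ex r m K)%:R / ('C(m, r))%:R + d) * ('C(n, r))%:R <= #|E|%:R.
  apply: le_trans hE; rewrite exn.
  have := hm n mn; rewrite /a => h.
  have e2 : eps = 2 * d by rewrite /d mulrC divfK // pnatr_eq0.
  rewrite e2.
  have : 0 <= 2 * d * (n%:R ^+ r - ('C(n, r))%:R) by rewrite mulr_ge0 ?subr_ge0 // mulr_ge0 // ltW.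
  have := ler_wpM2r (ltW Cnr) h.
  rewrite /a; nra.
have hS := supersat vm rm mn uE hE'.
rewrite -/v in hS.
have nv : (n ^ v <= 2 ^ v * ('C(n, v) * v`!))%N.
  apply: leq_trans (leq_mul (leqnn _) (bin_ge n v)).
  rewrite -expnMn; apply: leq_pow; exact: aux_nat vn.
have hEmb : c * n%:R ^+ v <= #|Emb K E|%:R.
  have h1 : n%:R ^+ v <= (2 ^ v * ('C(n, v) * v`!))%N%:R :> R by rewrite -natrX ler_nat.
  rewrite /c natrM natrM natrM in h1 *.
  rewrite natrM; apply: aux_ineq; first exact: h1; first exact: hS.
  - by rewrite ltr0n expn_gt0.
  - by rewrite ltr0n fact_gt0.
  - by rewrite ltr0n.
  - exact: ltW.
pose Phi (phi : {ffun VK -> 'I_n}) : v.-tuple 'I_n := [tuple phi (enum_val i) | i < v].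
pose toF (tp : v.-tuple 'I_n) : {ffun VK -> 'I_n} := [ffun x => tnth tp (enum_rank x)].
have toFK : forall phi, toF (Phi phi) = phi.
  by move=> phi; apply/ffunP => x; rewrite ffunE tnth_mktuple enum_rankK.
set A := [set tp : v.-tuple 'I_n | toF tp \in Emb K E].
have hA : c * n%:R ^+ v <= #|A|%:R.
  apply: le_trans hEmb _; rewrite ler_nat.
  rewrite -(card_imset _ (can_inj toFK)); apply: subset_leq_card.
  by apply/subsetP => tp /imsetP[phi hphi ->]; rewrite inE toFK.
have [T [cT PT]] := HN n nN A hA.
apply: (@build k r f n F col E (fun x => T (enum_rank x))) => //.
- exact: leq_trans r2 (ltnW rk).
- move=> phi hphi; rewrite -(toFK phi).
  have : Phi phi \in A.
    apply: PT => i; rewrite tnth_mktuple.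
    by have := hphi (enum_val i); rewrite enum_valK.
  by rewrite inE.
Qed.
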